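(* Let $\chi$ be the solution of the cell problem. (a) If $0<c_\psi\le\psi\le C_\psi$, then $\|\chi\|_{L^\infty(N,p)}\le\frac p2\frac{C_\psi}{c_\psi}$. (b) If in addition $\|D_X\psi\|_{L^\infty(N,p)}\le C'_\psi$, then \[ \max_{1\le i\le N}|D_X\psi^0(X_i)|\le\frac{C_\psi}{c_\psi}C'_\psi,\qquad \|D_X\chi\|_{L^\infty(N,p)}\le p\frac{C'_\psi}{c_\psi}. \]
   Context: Let $\epsilon>0$ and $N,p$ positive integers; $X_i=\epsilon i$, $Y_j=j$. Two-scale functions $g:\epsilon\mathbb Z\times\mathbb Z\to\mathbb R$ satisfy $g(X_{i+N},Y_j)=g(X_i,Y_j)=g(X_i,Y_{j+p})$; $D_Xg(X_i,Y_j)=(g(X_{i+1},Y_j)-g(X_i,Y_j))/\epsilon$, $D_Yg(X_i,Y_j)=g(X_i,Y_{j+1})-g(X_i,Y_j)$, $\langle g\rangle_Y(X_i)=\frac1p\sum_{j=1}^pg(X_i,Y_j)$, $\|g\|_{L^\infty(N,p)}=\max_{1\le i\le N,1\le j\le p}|g(X_i,Y_j)|$. $\psi$ is a two-scale function with $0<c_\psi\le\psi(X_i,Y_j)\le C_\psi$ for all $i,j$. The homogenized tensor is $\psi^0(X_i)=\langle1/\psi(X_i,\cdot)\rangle_Y^{-1}$, with $D_X\psi^0(X_i)=(\psi^0(X_{i+1})-\psi^0(X_i))/\epsilon$. The cell solution $\chi$ is the two-scale function with $\langle\chi(X_i,\cdot)\rangle_Y=0$ and $-D_Y(\psi D_Y\chi)=D_Y\psi$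 at every $(X_i,Y_j)$. *)

(* Defs.v *)
From mathcomp Require Import all_boot all_order all_algebra.
From mathcomp Require Import reals.
Set Implicit Arguments. Unset Strict Implicit. Unset Printing Implicit Defensive.
Import Order.TTheory GRing.Theory Num.Theory.
Local Open Scope ring_scope.

(* A two-scale function g(X_i, Y_j), X_i = eps*i, Y_j = j, is represented
   by its values indexed by (i, j) : int * int. *)
Section TwoScale.
Variable R : realType.

Definition two_scale (N p : nat) (g : int -> int -> R) : Prop :=
  forall i j : int, g (i + N%:Z) j = g i j /\ g i (j + p%:Z) = g i j.

Definition DX (eps : R) (g : int -> int -> R) : int -> int -> R :=
  fun i j => (g (i + 1) j - g i j) / eps.

Definition DY (g : int -> int -> R) : int -> int -> R :=
  fun i j => g i (j + 1) - g i j.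

Definition avgY (p : nat) (g : int -> int -> R) (i : int) : R :=
  (p%:R)^-1 * \sum_(j < p) g i (j.+1)%:Z.

Definition Linf (N p : nat) (g : int -> int -> R) : R :=
  \big[Num.max/0]_(i < N) \big[Num.max/0]_(j < p) `|g (i.+1)%:Z (j.+1)%:Z|.

Definition psi0 (p : nat) (psi : int -> int -> R) (i : int) : R :=
  (avgY p (fun i j => (psi i j)^-1) i)^-1.

Definition DXpsi0 (eps : R) (p : nat) (psi : int -> int -> R) (i : int) : R :=
  (psi0 p psi (i + 1) - psi0 p psi i) / eps.

Definition cell_solution (N p : nat) (psi chi : int -> int -> R) : Prop :=
  two_scale N p chi /\
  (forall i : int, avgY p chi i = 0) /\
  (forall i j : int,
     - DY (fun i j => psi i j * DY chi i j) i j = DY psi i j).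

End TwoScale.

(* Main.v *)
Require Import Defs.
From mathcomp Require Import all_boot all_order all_algebra.
From mathcomp Require Import reals ring lra.
Import Order.TTheory GRing.Theory Num.Theory.
Local Open Scope ring_scope.


Lemma tv_pair (R : realFieldType) (p : nat) (u : nat -> R) :
  u p.+1 = u 1 -> forall j k, (0 < j)%N -> (j <= k)%N -> (k <= p)%N ->
  2 * `|u k - u j| <= \sum_(1 <= l < p.+1) `|u l.+1 - u l|.
Proof.
move=> Hper j k j0 jk kp.
have T := fun a b (h : (a <= b)%N) => telescope_sumr u h.
have e1 : u k - u j = \sum_(j <= l < k) (u l.+1 - u l) by rewrite T.
have e2 : u k - u j = - (\sum_(k <= l < p.+1) (u l.+1 - u l) + \sum_(1 <= l < j) (u l.+1 - u l)).
  rewrite !T // ?Hper; [lra| apply: leqW].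
  by [].
have -> : \sum_(1 <= l < p.+1) `|u l.+1 - u l| =
   \sum_(1 <= l < j) `|u l.+1 - u l| + \sum_(j <= l < k) `|u l.+1 - u l|
   + \sum_(k <= l < p.+1) `|u l.+1 - u l|.
  rewrite -big_cat_nat // -big_cat_nat //.
  - exact: leq_trans j0 jk.
  - exact: leqW.
have h1 := ler_norm_sum (index_iota j k) (fun l => u l.+1 - u l) xpredT.
have h2 := ler_norm_sum (index_iota k p.+1) (fun l => u l.+1 - u l) xpredT.
have h3 := ler_norm_sum (index_iota 1 j) (fun l => u l.+1 - u l) xpredT.
have h4 := ler_normD (\sum_(k <= l < p.+1) (u l.+1 - u l)) (\sum_(1 <= l < j) (u l.+1 - u l)).
have : `|u k - u j| <= `|\sum_(j <= l < k) (u l.+1 - u l)| by rewrite e1.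
have : `|u k - u j| <= `|\sum_(k <= l < p.+1) (u l.+1 - u l) + \sum_(1 <= l < j) (u l.+1 - u l)|
  by rewrite {1}e2 normrN.
move: h1 h2 h3 h4; rewrite /=; lra.
Qed.

Lemma tv_bound (R : realFieldType) (p : nat) (u : nat -> R) :
  (0 < p)%N -> u p.+1 = u 1 -> \sum_(k < p) u k.+1 = 0 ->
  forall j, (0 < j)%N -> (j <= p)%N ->
  `|u j| <= (\sum_(l < p) `|u l.+2 - u l.+1|) / 2.
Proof.
move=> p0 Hper Hsum j j0 jp.
have -> : \sum_(l < p) `|u l.+2 - u l.+1| = \sum_(1 <= l < p.+1) `|u l.+1 - u l|.
  by rewrite big_add1 /= big_mkord.
set TV := \sum_(1 <= l < p.+1) _.
have Hpair : forall k, (k < p)%N -> `|u j - u k.+1| <= TV / 2.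
  move=> k kp.
  case: (leqP j k.+1) => h.
    have := @tv_pair _ p u Hper j k.+1 j0 h kp; rewrite distrC -/TV; lra.
  have := @tv_pair _ p u Hper k.+1 j (ltn0Sn k) (ltnW h) jp; rewrite -/TV; lra.
have e : u j *+ p = \sum_(k < p) (u j - u k.+1).
  by rewrite sumrB Hsum subr0 sumr_const card_ord.
have : `|u j *+ p| <= (TV / 2) *+ p.
  rewrite e; apply: le_trans (ler_norm_sum _ _ _) _.
  apply: le_trans (_ : _ <= \sum_(k < p) (TV / 2)) _.
    by apply: ler_sum => k _; exact: Hpair.
  by rewrite sumr_const card_ord.
move=> H.
have pp : (0 : R) < p%:R by rewrite ltr0n.
rewrite -(ler_pM2r pp) !mulr_natr; apply: le_trans H.
by rewrite normrMn.
Qed.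


Lemma bigmax_le (R : realDomainType) n (F : nat -> R) x :
  0 <= x -> (forall i, (i < n)%N -> F i <= x) -> \big[Num.max/0]_(i<n) F i <= x.
Proof.
move=> x0 H; apply: (big_ind (fun y => y <= x)) => // [a b ha hb|i _].
  by rewrite ge_max ha hb.
exact: H.
Qed.

Lemma bigmax_ge (R : realDomainType) n (F : nat -> R) i :
  (i < n)%N -> F i <= \big[Num.max/0]_(j<n) F j.
Proof.
elim: n F i => [|n IH] F i lt; first by rewrite ltn0 in lt.
rewrite big_ord_recl le_max.
case: i lt => [|i] lt; first by rewrite lexx.
apply/orP; right.
exact: (IH (fun k => F k.+1) i lt).
Qed.

Lemma sum_pos (R : realDomainType) p (g : nat -> R) :
  (0 < p)%N -> (forall l, 0 < g l) -> 0 < \sum_(l<p) g l.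
Proof.
case: p => // p _ Hg; rewrite big_ord_recl.
have h1 := Hg 0%N.
have h2 : 0 <= \sum_(i<p) g (lift ord0 i) := sumr_ge0 _ (fun i _ => ltW (Hg _)).
move: h1 h2 => /=; lra.
Qed.

Lemma ratio_bound (R : realFieldType) (a b c C : R) :
  0 < c -> c <= a <= C -> c <= b <= C -> `|a / b - 1| <= C / c.
Proof.
move=> c0 /andP[ca aC] /andP[cb bC].
have b0 : 0 < b by apply: lt_le_trans cb.
have a0 : 0 < a by apply: lt_le_trans ca.
have h1 : a / b <= C / c.
  apply: ler_pM => //; first exact: ltW.
  - by rewrite invr_ge0 ltW.
  - by rewrite lef_pV2 ?posrE.
have h2 : 0 <= a / b by rewrite divr_ge0 // ltW.
have h3 : 1 <= C / c by rewrite ler_pdivlMr // mul1r; apply: le_trans cb bC.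
rewrite ler_norml; apply/andP; split; lra.
Qed.

Lemma alg_b (R : realFieldType) (p : nat) (f g : nat -> R) (E : R) :
  (0 < p)%N -> 0 <= E -> (forall l, 0 < f l) -> (forall l, 0 < g l) ->
  (forall l, (l < p)%N -> `|f l - g l| <= E * g l) ->
  `|p%:R / (\sum_(l<p) g l) - p%:R / (\sum_(l<p) f l)| <= (p%:R / (\sum_(l<p) f l)) * E /\
  \sum_(l<p) `|p%:R / (\sum_(l<p) g l) * g l - p%:R / (\sum_(l<p) f l) * f l|
    <= 2 * (p%:R * E).
Proof.
move=> p0 E0 Hf Hg Hfg.
set F := \sum_(l<p) f l; set G := \sum_(l<p) g l.
have F0 : 0 < F := @sum_pos _ p f p0 Hf.
have G0 : 0 < G := @sum_pos _ p g p0 Hg.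
have pp : (0 : R) < p%:R by rewrite ltr0n.
have Sfg : \sum_(l<p) `|g l - f l| <= E * G.
  rewrite /G mulr_sumr; apply: ler_sum => l _; rewrite distrC; exact: Hfg (ltn_ord l).
have FG : `|F - G| <= E * G.
  rewrite /F /G -sumrB; apply: le_trans (ler_norm_sum _ _ _) _.
  rewrite mulr_sumr; apply: ler_sum => l _; exact: Hfg (ltn_ord l).
have FGG : `|F - G| / G <= E by rewrite ler_pdivrMr.
have Fn : F != 0 by rewrite gt_eqF.
have Gn : G != 0 by rewrite gt_eqF.
have e1 : p%:R / G - p%:R / F = (p%:R / F) * ((F - G) / G) by field; apply/andP.
have pF : 0 <= p%:R / F by rewrite divr_ge0 // ltW.
have part1 : `|p%:R / G - p%:R / F| <= (p%:R / F) * E.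
  rewrite e1 normrM (ger0_norm pF) normrM normfV (gtr0_norm G0).
  exact: ler_wpM2l.
split=> //.
have pG : 0 <= p%:R / G by rewrite divr_ge0 // ltW.
apply: le_trans (_ : _ <= \sum_(l<p) (p%:R / G * `|g l - f l| + `|p%:R / G - p%:R / F| * f l)) _.
  apply: ler_sum => l _.
  have -> : p%:R / G * g l - p%:R / F * f l = p%:R / G * (g l - f l) + (p%:R / G - p%:R / F) * f l by ring.
  apply: le_trans (ler_normD _ _) _.
  by rewrite normrM (ger0_norm pG) normrM (gtr0_norm (Hf l)).
rewrite big_split /= -!mulr_sumr -/F.
have h1 : p%:R / G * \sum_(l<p) `|g l - f l| <= p%:R / G * (E * G) by exact: ler_wpM2l.
have h2 : p%:R / G * (E * G) = p%:R * E by field.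
have h3 : `|p%:R / G - p%:R / F| * F <= (p%:R / F) * E * F by rewrite ler_pM2r.
have h4 : (p%:R / F) * E * F = p%:R * E by field.
lra.
Qed.

Lemma tele_shift (R : realFieldType) (u : nat -> R) (p : nat) :
  \sum_(l < p) (u l.+2 - u l.+1) = u p.+1 - u 1%N.
Proof.
rewrite -(telescope_sumr u (ltn0Sn p)).
by rewrite big_add1 /= big_mkord.
Qed.

Theorem lemma4p3 (R : realType) (eps : R) (N p : nat)
  (psi chi : int -> int -> R) (c_psi C_psi C'_psi : R) :
  0 < eps -> (0 < N)%N -> (0 < p)%N ->
  two_scale N p psi ->
  0 < c_psi ->
  (forall i j : int, c_psi <= psi i j <= C_psi) ->
  cell_solution N p psi chi ->
  Linf N p chi <= (p%:R / 2) * (C_psi / c_psi) /\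
  (Linf N p (DX eps psi) <= C'_psi ->
     \big[Num.max/0]_(i < N) `|DXpsi0 eps p psi (i.+1)%:Z| <= (C_psi / c_psi) * C'_psi /\
     Linf N p (DX eps chi) <= p%:R * (C'_psi / c_psi)).
Proof.
move=> Heps HN Hp Hpsi Hc Hb [Hchi [Havg Hcell]].
have Pz1 : forall n : nat, (n%:Z + 1) = (n.+1)%:Z by move=> n; rewrite -PoszD addn1.
have psi_pos : forall i j, 0 < psi i j.
  by move=> i j; have /andP[h _] := Hb i j; exact: lt_le_trans Hc h.
have cC : c_psi <= C_psi by have /andP[h1 h2] := Hb 0 0; exact: le_trans h1 h2.
have pp : (0:R) < p%:R by rewrite ltr0n.
have F0 : forall i, 0 < \sum_(l<p) (psi i (l.+1)%:Z)^-1.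
  move=> i; apply: (@sum_pos _ p (fun l => (psi i (l.+1)%:Z)^-1)) => // l.
  by rewrite invr_gt0.
have psi0E : forall i, psi0 p psi i = p%:R / \sum_(l<p) (psi i (l.+1)%:Z)^-1.
  by move=> i; rewrite /psi0 /avgY invfM invrK mulrC.
have FcC : forall i, (\sum_(l<p) (psi i (l.+1)%:Z)^-1) * c_psi <= p%:R /\
                     p%:R <= (\sum_(l<p) (psi i (l.+1)%:Z)^-1) * C_psi.
  move=> i; rewrite !mulr_suml; split.
  - apply: le_trans (_ : _ <= \sum_(l<p) (1:R)) _; last by rewrite sumr_const card_ord.
    apply: ler_sum => l _; rewrite mulrC ler_pdivrMr // mul1r.
    by have /andP[] := Hb i (l.+1)%:Z.
  - apply: le_trans (_ : \sum_(l<p) (1:R) <= _) ; first by rewrite sumr_const card_ord.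
    apply: ler_sum => l _; rewrite mulrC ler_pdivlMr // mul1r.
    by have /andP[] := Hb i (l.+1)%:Z.
have psi0b : forall i, c_psi <= psi0 p psi i <= C_psi.
  move=> i; have [h1 h2] := FcC i; have h0 := F0 i.
  rewrite psi0E ler_pdivlMr // ler_pdivrMr //; apply/andP; split; lra.
have per : forall i, chi i (p.+1)%:Z = chi i (1%N)%:Z.
  by move=> i; have := (Hchi i 1).2; rewrite addrC Pz1.
have dYd : forall i (l : nat), DY chi i (l.+1)%:Z = chi i (l.+2)%:Z - chi i (l.+1)%:Z.
  by move=> i l; rewrite /DY Pz1.
have Kc : forall i (n : nat), psi i (n.+1)%:Z * (DY chi i (n.+1)%:Z + 1)
                              = psi i 1 * (DY chi i 1 + 1).
  move=> i; elim=> // n IH; rewrite -IH.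
  have := Hcell i (n.+1)%:Z; rewrite /DY /= !Pz1; lra.
have msum : forall i, \sum_(k<p) chi i (k.+1)%:Z = 0.
  move=> i; have := Havg i; rewrite /avgY => /eqP; rewrite mulf_eq0 invr_eq0 pnatr_eq0.
  case/orP => /eqP h //; by move: Hp; rewrite h.
have dY : forall i (n : nat), DY chi i (n.+1)%:Z = psi0 p psi i / psi i (n.+1)%:Z - 1.
  move=> i.
  set Ki := psi i 1 * (DY chi i 1 + 1).
  have dK : forall n : nat, DY chi i (n.+1)%:Z = Ki / psi i (n.+1)%:Z - 1.
    move=> n; rewrite /Ki -(Kc i n); field; by rewrite gt_eqF.
  have s0 : \sum_(l<p) DY chi i (l.+1)%:Z = 0.
    under eq_bigr do rewrite dYd.
    by rewrite (@tele_shift _ (fun n => chi i n%:Z) p) /= per subrr.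
  have KF : Ki * \sum_(l<p) (psi i (l.+1)%:Z)^-1 = p%:R.
    move: s0; under eq_bigr do rewrite dK.
    rewrite sumrB -mulr_sumr sumr_const card_ord => /eqP; rewrite subr_eq0 => /eqP.
    done.
  have -> : psi0 p psi i = Ki by rewrite psi0E -KF mulfK // gt_eqF.
  exact: dK.
split.
  rewrite /Linf.
  have M0 : 0 <= p%:R / 2 * (C_psi / c_psi).
    by rewrite mulr_ge0 // ?divr_ge0 // ltW // (lt_le_trans Hc cC).
  apply: (@bigmax_le R N (fun i => \big[Num.max/0]_(j<p) `|chi (i.+1)%:Z (j.+1)%:Z|)) => // i Hi.
  apply: (@bigmax_le R p (fun j => `|chi (i.+1)%:Z (j.+1)%:Z|)) => // j Hj.
  set ii := (i.+1)%:Z.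
  have := @tv_bound R p (fun n => chi ii n%:Z) Hp (per ii) (msum ii) j.+1 (ltn0Sn j) Hj.
  move=> /le_trans; apply.
  have : \sum_(l<p) `|chi ii (l.+2)%:Z - chi ii (l.+1)%:Z| <= p%:R * (C_psi / c_psi).
    apply: le_trans (_ : _ <= \sum_(l<p) (C_psi / c_psi)) _; last first.
      by rewrite sumr_const card_ord mulr_natl.
    apply: ler_sum => l _; rewrite -dYd dY; apply: ratio_bound => //.
  rewrite /=; lra.
move=> HC'.
have HD : forall i l, (i < N)%N -> (l < p)%N ->
    `|psi ((i.+1)%:Z + 1) (l.+1)%:Z - psi (i.+1)%:Z (l.+1)%:Z| <= eps * C'_psi.
  move=> i l Hi Hl.
  have h1 := @bigmax_ge R p (fun l => `|DX eps psi (i.+1)%:Z (l.+1)%:Z|) l Hl.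
  have h2 := @bigmax_ge R N (fun i => \big[Num.max/0]_(l<p) `|DX eps psi (i.+1)%:Z (l.+1)%:Z|) i Hi.
  have h := le_trans (le_trans h1 h2) HC'.
  by move: h; rewrite /DX /= normrM normfV (gtr0_norm Heps) ler_pdivrMr // mulrC.
have C'0 : 0 <= C'_psi.
  have h := HD 0%N 0%N HN Hp.
  by rewrite -(pmulr_rge0 _ Heps); apply: le_trans h.
set E := eps * C'_psi / c_psi.
have E0 : 0 <= E by rewrite /E divr_ge0 ?mulr_ge0 // ltW.
have Hfg : forall i, (i < N)%N -> forall l, (l < p)%N ->
   `|(psi (i.+1)%:Z (l.+1)%:Z)^-1 - (psi ((i.+1)%:Z + 1) (l.+1)%:Z)^-1|
     <= E * (psi ((i.+1)%:Z + 1) (l.+1)%:Z)^-1.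
  move=> i Hi l Hl.
  set a := psi (i.+1)%:Z (l.+1)%:Z; set b := psi ((i.+1)%:Z + 1) (l.+1)%:Z.
  have a0 : 0 < a := psi_pos _ _.
  have b0 : 0 < b := psi_pos _ _.
  have ca : c_psi <= a by have /andP[] := Hb (i.+1)%:Z (l.+1)%:Z.
  have -> : a^-1 - b^-1 = ((b - a) / a) * b^-1 by field; apply/andP; split; rewrite gt_eqF.
  have hb : 0 < b^-1 by rewrite invr_gt0.
  have ha : a^-1 <= c_psi^-1 by rewrite lef_pV2 ?posrE.
  rewrite normrM (gtr0_norm hb); apply: ler_wpM2r; first exact: ltW.
  rewrite normrM normfV (gtr0_norm a0) /E.
  apply: ler_pM => //; [by rewrite invr_ge0 ltW | exact: HD].
have ipos : forall i l, 0 < (psi i l)^-1 by move=> i l; rewrite invr_gt0.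
have Cc0 : 0 <= C_psi / c_psi by rewrite divr_ge0 // ltW // (lt_le_trans Hc cC).
split.
  apply: (@bigmax_le R N (fun i => `|DXpsi0 eps p psi (i.+1)%:Z|)).
    exact: mulr_ge0.
  move=> i Hi.
  have [h1 _] := @alg_b R p (fun l => (psi (i.+1)%:Z (l.+1)%:Z)^-1)
     (fun l => (psi ((i.+1)%:Z + 1) (l.+1)%:Z)^-1) E Hp E0
     (fun l => ipos _ _) (fun l => ipos _ _) (Hfg i Hi).
  rewrite /= in h1.
  rewrite /DXpsi0 !psi0E normrM normfV (gtr0_norm Heps) ler_pdivrMr //.
  have hC := psi0b (i.+1)%:Z; rewrite psi0E in hC; case/andP: hC => _ hC.
  have h3 := ler_wpM2r E0 hC.
  have hE : C_psi * E = C_psi / c_psi * C'_psi * eps by rewrite /E; ring.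
  lra.
rewrite /Linf.
apply: (@bigmax_le R N (fun i => \big[Num.max/0]_(j<p) `|DX eps chi (i.+1)%:Z (j.+1)%:Z|)).
  by rewrite mulr_ge0 // divr_ge0 // ltW.
move=> i Hi.
apply: (@bigmax_le R p (fun j => `|DX eps chi (i.+1)%:Z (j.+1)%:Z|)).
  by rewrite mulr_ge0 // divr_ge0 // ltW.
move=> j Hj.
have [_ h2] := @alg_b R p (fun l => (psi (i.+1)%:Z (l.+1)%:Z)^-1)
   (fun l => (psi ((i.+1)%:Z + 1) (l.+1)%:Z)^-1) E Hp E0
   (fun l => ipos _ _) (fun l => ipos _ _) (Hfg i Hi).
rewrite /= in h2.
have H := @tv_bound R p (fun n => chi ((i.+1)%:Z + 1) n%:Z - chi (i.+1)%:Z n%:Z) Hp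
   ltac:(by rewrite /= !per) ltac:(by rewrite /= sumrB !msum subr0) j.+1 (ltn0Sn j) Hj.
rewrite /= in H.
have eTV : \sum_(l<p) `|chi ((i.+1)%:Z + 1) (l.+2)%:Z - chi (i.+1)%:Z (l.+2)%:Z
                    - (chi ((i.+1)%:Z + 1) (l.+1)%:Z - chi (i.+1)%:Z (l.+1)%:Z)| =
   \sum_(l<p) `|p%:R / (\sum_(l<p) (psi ((i.+1)%:Z + 1) (l.+1)%:Z)^-1) * (psi ((i.+1)%:Z + 1) (l.+1)%:Z)^-1
               - p%:R / (\sum_(l<p) (psi (i.+1)%:Z (l.+1)%:Z)^-1) * (psi (i.+1)%:Z (l.+1)%:Z)^-1|.
  apply: eq_bigr => l _; congr (`|_|).
  have := dYd ((i.+1)%:Z + 1) l; have := dYd (i.+1)%:Z l; rewrite !dY !psi0E; lra.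
rewrite eTV in H.
rewrite /DX normrM normfV (gtr0_norm Heps) ler_pdivrMr //.
have hE : p%:R * E = p%:R * (C'_psi / c_psi) * eps by rewrite /E; ring.
lra.
Qed.
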